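(* Let $B\in\mathbb{C}^{n\times n}$ be nonzero of rank $r$ with Hartwig–Spindelböck decomposition $B=U\begin{bmatrix}\Sigma K&\Sigma L\\0&0\end{bmatrix}U^*$, let $T\in\mathbb{C}^{r\times r}$ be idempotent, and let $A=U\begin{bmatrix}(\Sigma^{-1}T)^\dagger K&(\Sigma^{-1}T)^\dagger L\\0&0\end{bmatrix}U^*$, so that $A\le^{\diamond}B$. Then $(AB)^\dagger=B^\dagger A^\dagger$ if and only if $$\big((\Sigma^{-1}T)^\dagger K\Sigma\big)^\dagger=\Sigma^{-1}K^*\Sigma^{-1}T.$$
   Context: $M^*$ is the conjugate transpose, $M^\dagger$ the Moore–Penrose inverse, $\mathcal{R}(M)$ the column space. Hartwig–Spindelböck decomposition: every $B\in\mathbb{C}^{n\times n}$ of rank $r>0$ can be written $B=U\begin{bmatrix}\Sigma K&\Sigma L\\0&0\end{bmatrix}U^*$ with $U$ unitary, $\Sigma\in\mathbb{C}^{r\times r}$ the positive diagonal matrix of nonzero singular values of $B$, $K\in\mathbb{C}^{r\times r}$, $L\in\mathbb{C}^{r\times(n-r)}$ with $KK^*+LL^*=I_r$. Diamond order: $A\le^{\diamond}B$ iff $\mathcal{R}(A)\subseteq\mathcal{R}(B)$, $\mathcal{R}(A^* )\subseteq\mathcal{R}(B^* )$, and $AB^*A=AA^*A$. *)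

(* Defs.v *)
(* Complex matrices over an arbitrary numClosedFieldType C
   (e.g. algC, or complex R); conjugation is Num.conj (notation x^* ). *)
From HB Require Import structures.
From mathcomp Require Import all_boot all_order all_algebra.
From Stdlib Require Import ClassicalEpsilon.
Set Implicit Arguments. Unset Strict Implicit. Unset Printing Implicit Defensive.
Import Order.TTheory GRing.Theory Num.Theory.
Local Open Scope ring_scope.

Definition ctmx (C : numClosedFieldType) (m n : nat) (M : 'M[C]_(m, n))
  : 'M[C]_(n, m) := (map_mx Num.conj M)^T.

Definition penrose (C : numClosedFieldType) (m n : nat)
  (M : 'M[C]_(m, n)) (X : 'M[C]_(n, m)) : Prop :=
  [/\ M *m X *m M = M, X *m M *m X = X,
      ctmx (M *m X) = M *m X & ctmx (X *m M) = X *m M].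

(* Moore-Penrose inverse M^+ : the (unique, always existing) matrix
   satisfying the Penrose equations, chosen by classical epsilon. *)
Definition mpinv (C : numClosedFieldType) (m n : nat) (M : 'M[C]_(m, n))
  : 'M[C]_(n, m) :=
  epsilon (inhabits (0 : 'M[C]_(n, m))) (penrose M).

(* Main.v *)
Require Import Defs.
From HB Require Import structures.
From mathcomp Require Import all_boot all_order all_algebra.
From Stdlib Require Import ClassicalEpsilon.
Import Order.TTheory GRing.Theory Num.Theory.
Local Open Scope ring_scope.


Section CT.
Variable C : numClosedFieldType.

Lemma ctmx_mul m n p (A : 'M[C]_(m, n)) (B : 'M[C]_(n, p)) :
  ctmx (A *m B) = ctmx B *m ctmx A.
Proof. by rewrite /ctmx map_mxM trmx_mul. Qed.

Lemma ctmxK m n (A : 'M[C]_(m, n)) : ctmx (ctmx A) = A.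
Proof.
rewrite /ctmx map_trmx trmxK; apply/matrixP => i j; rewrite !mxE.
exact: conjCK.
Qed.

Lemma ctmx1 n : ctmx (1%:M : 'M[C]_n) = 1%:M.
Proof. by rewrite /ctmx map_mx1 tr_scalar_mx. Qed.

Lemma ctmx0 m n : ctmx (0 : 'M[C]_(m, n)) = 0.
Proof. by rewrite /ctmx map_mx0 trmx0. Qed.

Lemma ctmx_inv n (A : 'M[C]_n) : ctmx (invmx A) = invmx (ctmx A).
Proof. by rewrite /ctmx map_invmx trmx_inv. Qed.

Lemma ctmx_row m n1 n2 (A1 : 'M[C]_(m, n1)) (A2 : 'M[C]_(m, n2)) :
  ctmx (row_mx A1 A2) = col_mx (ctmx A1) (ctmx A2).
Proof. by rewrite /ctmx map_row_mx tr_row_mx. Qed.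

Lemma ctmx_col m1 m2 n (A1 : 'M[C]_(m1, n)) (A2 : 'M[C]_(m2, n)) :
  ctmx (col_mx A1 A2) = row_mx (ctmx A1) (ctmx A2).
Proof. by rewrite /ctmx map_col_mx tr_col_mx. Qed.

Lemma rv_ct0 n (y : 'rV[C]_n) : y *m ctmx y = 0 -> y = 0.
Proof.
move=> /matrixP /(_ 0 0); rewrite !mxE => H.
have H2 : \sum_j `|y 0 j| ^+ 2 = 0.
  rewrite -[RHS]H; apply: eq_bigr => j _; by rewrite !mxE normCK.
apply/matrixP => i j; rewrite !mxE (ord1 i).
have : `|y 0 j| ^+ 2 = 0 by apply: (psumr_eq0P _ H2) => // k _; rewrite exprn_ge0.
by move/eqP; rewrite expf_eq0 /= normr_eq0 => /eqP.
Qed.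

Lemma gram_unit m n (G : 'M[C]_(m, n)) : row_free G -> G *m ctmx G \in unitmx.
Proof.
move=> fG; rewrite unitmxE unitfE; apply/negP => /det0P [v nz0 Hv].
move/negP: nz0; apply; apply/eqP.
have : (v *m G) *m ctmx (v *m G) = 0.
  by rewrite ctmx_mul !mulmxA -(mulmxA v) Hv mul0mx.
move/rv_ct0; rewrite -(mul0mx _ G) => /(row_free_inj fG); done.
Qed.
End CT.


Section MP.
Variable C : numClosedFieldType.

Lemma penrose_unique m n (M : 'M[C]_(m, n)) X Y :
  penrose M X -> penrose M Y -> X = Y.
Proof.
case=> [h1 h2 h3 h4] [g1 g2 g3 g4].
have e : ctmx M = ctmx M *m (M *m Y) by rewrite -g3 -ctmx_mul g1.
have e' : ctmx M = X *m M *m ctmx M by rewrite -{1}h1 -mulmxA ctmx_mul h4.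
have eX : X = X *m M *m Y.
  rewrite -{1}h2 -mulmxA -h3 ctmx_mul e !mulmxA -(mulmxA X (ctmx X)) -ctmx_mul h3.
  by rewrite mulmxA h2.
have eY : Y = X *m M *m Y.
  rewrite -{1}g2 -g4 ctmx_mul e' -(mulmxA (X *m M)) -ctmx_mul g4.
  have -> : X *m M *m (Y *m M) *m Y = X *m M *m (Y *m M *m Y) by rewrite !mulmxA.
  by rewrite g2.
by rewrite eX -eY.
Qed.

Lemma penrose_fact m k n (F : 'M[C]_(m, k)) (G : 'M[C]_(k, n)) :
  G *m ctmx G \in unitmx -> ctmx F *m F \in unitmx ->
  penrose (F *m G) (ctmx G *m invmx (G *m ctmx G) *m invmx (ctmx F *m F) *m ctmx F).
Proof.
move=> uG uF.
have hP : ctmx (invmx (G *m ctmx G)) = invmx (G *m ctmx G) by rewrite ctmx_inv ctmx_mul ctmxK.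
have hQ : ctmx (invmx (ctmx F *m F)) = invmx (ctmx F *m F) by rewrite ctmx_inv ctmx_mul ctmxK.
have eP : forall p (Y : 'M_(p, k)), Y *m G *m ctmx G *m invmx (G *m ctmx G) = Y.
  by move=> p Y; rewrite -!mulmxA (mulmxA G) mulmxV // mulmx1.
have eQ : forall p (Y : 'M_(p, k)), Y *m invmx (ctmx F *m F) *m ctmx F *m F = Y.
  by move=> p Y; rewrite -!mulmxA mulVmx // mulmx1.
split; rewrite !mulmxA.
- by rewrite eP eQ.
- by rewrite eQ eP.
- by rewrite eP !ctmx_mul ctmxK hQ mulmxA.
- by rewrite eQ !ctmx_mul ctmxK hP mulmxA.
Qed.

Lemma penrose_exists m n (M : 'M[C]_(m, n)) : exists X, penrose M X.
Proof.
have rF : \rank (col_base M) = \rank M.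
  apply/eqP; rewrite eqn_leq rank_leq_col /=.
  by rewrite -{1}(mulmx_base M) mxrankM_maxl.
have uG : row_base M *m ctmx (row_base M) \in unitmx.
  by apply: gram_unit; exact: row_base_free.
have uF : ctmx (col_base M) *m col_base M \in unitmx.
  have := @gram_unit _ _ _ (ctmx (col_base M)); rewrite ctmxK; apply.
  by rewrite /row_free /ctmx mxrank_tr mxrank_map rF.
have := @penrose_fact _ _ _ (col_base M) (row_base M) uG uF; rewrite mulmx_base; eauto.
Qed.

Lemma mpinvP m n (M : 'M[C]_(m, n)) : penrose M (mpinv M).
Proof.
rewrite /mpinv; apply: epsilon_spec; exact: penrose_exists.
Qed.

Lemma mpinv_eq m n (M : 'M[C]_(m, n)) X : penrose M X -> mpinv M = X.
Proof. by move=> h; apply: (penrose_unique _ _ _ _ _ (mpinvP _ _ M) h). Qed.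

Lemma penrose_sym m n (M : 'M[C]_(m, n)) X : penrose M X -> penrose X M.
Proof. by case=> [h1 h2 h3 h4]; split. Qed.

Lemma mpinvK m n (M : 'M[C]_(m, n)) : mpinv (mpinv M) = M.
Proof. exact/mpinv_eq/penrose_sym/mpinvP. Qed.
End MP.


Section S3.
Variable C : numClosedFieldType.

Lemma mulmxA3 a b c d e (A : 'M[C]_(a, b)) (B : 'M[C]_(b, c)) (D : 'M[C]_(c, d)) (E : 'M[C]_(d, e)) :
  A *m B *m D *m E = A *m (B *m D *m E).
Proof. by rewrite !mulmxA. Qed.

Lemma penrose_unitary N (U : 'M[C]_N) (Y Y' : 'M[C]_N) :
  ctmx U *m U = 1%:M -> penrose Y Y' ->
  penrose (U *m Y *m ctmx U) (U *m Y' *m ctmx U).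
Proof.
move=> hU [h1 h2 h3 h4].
have eU : forall p (Z : 'M_(p, N)), Z *m ctmx U *m U = Z.
  by move=> p Z; rewrite -mulmxA hU mulmx1.
split.
- by rewrite !mulmxA !eU (@mulmxA3 _ _ _ _ _ U) h1.
- by rewrite !mulmxA !eU (@mulmxA3 _ _ _ _ _ U) h2.
- by rewrite !mulmxA !eU -(mulmxA U Y) !ctmx_mul ctmxK -ctmx_mul h3 mulmxA.
- by rewrite !mulmxA !eU -(mulmxA U Y') !ctmx_mul ctmxK -ctmx_mul h4 mulmxA.
Qed.

Lemma ctmx_blk0 m n (P : 'M[C]_(m, m)) :
  ctmx (col_mx (row_mx P (0 : 'M_(m, n))) (0 : 'M_(n, m + n))) =
  col_mx (row_mx (ctmx P) 0) 0.
Proof.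
rewrite ctmx_col ctmx_row !ctmx0 -[X in row_mx _ X](@col_mx0 _ m n n) -block_mxEh.
by rewrite block_mxEv row_mx0.
Qed.

Lemma penrose_col r s n (Y : 'M[C]_(r, n)) (Y' : 'M[C]_(n, r)) :
  penrose Y Y' ->
  penrose (col_mx Y (0 : 'M_(s, n))) (row_mx Y' (0 : 'M_(n, s))).
Proof.
move=> [h1 h2 h3 h4].
have e1 : col_mx Y (0 : 'M_(s, n)) *m row_mx Y' (0 : 'M_(n, s)) =
          col_mx (row_mx (Y *m Y') 0) 0.
  by rewrite mul_col_mx mul_mx_row mulmx0 mul0mx.
have e2 : row_mx Y' (0 : 'M_(n, s)) *m col_mx Y (0 : 'M_(s, n)) = Y' *m Y.
  by rewrite mul_row_col mulmx0 addr0.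
split.
- by rewrite e1 mul_col_mx mul_row_col mul0mx mul0mx addr0 h1.
- by rewrite e2 mul_mx_row mulmx0 h2.
- by rewrite e1 ctmx_blk0 h3.
- by rewrite e2 h4.
Qed.

Lemma penrose_mulN r q (N : 'M[C]_(r, q)) (X X' : 'M[C]_r) :
  N *m ctmx N = 1%:M -> penrose X X' -> penrose (X *m N) (ctmx N *m X').
Proof.
move=> hN [h1 h2 h3 h4].
have eN : forall p (Z : 'M_(p, r)), Z *m N *m ctmx N = Z.
  by move=> p Z; rewrite -mulmxA hN mulmx1.
split.
- by rewrite !mulmxA eN h1.
- by rewrite !mulmxA eN mulmxA3 h2.
- by rewrite !mulmxA eN h3.
- by rewrite !mulmxA -(mulmxA (ctmx N) X') !ctmx_mul ctmxK -ctmx_mul h4 !mulmxA.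
Qed.

Lemma unit_blk_inj r s (U : 'M[C]_(r + s)) (P Q : 'M[C]_(r + s, r)) :
  ctmx U *m U = 1%:M ->
  U *m row_mx P (0 : 'M_(r + s, s)) *m ctmx U = U *m row_mx Q 0 *m ctmx U ->
  P = Q.
Proof.
move=> hU /(congr1 (fun Z => ctmx U *m Z *m U)).
rewrite !mulmxA hU !mul1mx -!mulmxA hU !mulmx1 => /eq_row_mx [] //.
Qed.
End S3.


Theorem theorem5p3 (C : numClosedFieldType) (r s : nat)
  (B U : 'M[C]_(r + s)) (d : 'rV[C]_r)
  (K T : 'M[C]_r) (L : 'M[C]_(r, s)) :
  (0 < r)%N ->
  \rank B = r ->
  U *m ctmx U = 1%:M ->
  (forall i, 0 < d 0 i) ->
  K *m ctmx K + L *m ctmx L = 1%:M ->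
  B = U *m block_mx (diag_mx d *m K) (diag_mx d *m L) 0 0 *m ctmx U ->
  T *m T = T ->
  let Sigma := diag_mx d in
  let A := U *m block_mx (mpinv (invmx Sigma *m T) *m K)
                         (mpinv (invmx Sigma *m T) *m L) 0 0 *m ctmx U in
  mpinv (A *m B) = mpinv B *m mpinv A <->
  mpinv (mpinv (invmx Sigma *m T) *m K *m Sigma)
    = invmx Sigma *m ctmx K *m invmx Sigma *m T.
Proof.
move=> _ _ hU hd hKL eB _ Sigma A.
have hU' : ctmx U *m U = 1%:M by apply: mulmx1C.
set N := row_mx K L.
have hN : N *m ctmx N = 1%:M by rewrite /N ctmx_row mul_row_col.
have uS : Sigma \in unitmx.
  rewrite unitmxE unitfE det_diag; apply/prodf_neq0 => i _.
  by rewrite gt_eqF // hd.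
set W := mpinv (invmx Sigma *m T).
have eA : A = U *m col_mx (W *m N) 0 *m ctmx U.
  by rewrite /A block_mxEv -mul_mx_row row_mx0.
clearbody A.
have eB' : B = U *m col_mx (Sigma *m N) 0 *m ctmx U.
  by rewrite eB block_mxEv -mul_mx_row row_mx0.
have eAB : A *m B = U *m col_mx (W *m K *m Sigma *m N) 0 *m ctmx U.
  rewrite eA eB' !mulmxA -(mulmxA _ (ctmx U) U) hU' mulmx1 -(mulmxA U) mul_col_mx mul0mx.
  by rewrite -(mulmxA W) {1}/N mul_row_col mulmx0 addr0 !mulmxA.
have pS : penrose Sigma (invmx Sigma).
  by split; rewrite ?mulmxV ?mulVmx ?mul1mx ?mulmx1 ?ctmx1.
have pA : mpinv A = U *m row_mx (ctmx N *m mpinv W) 0 *m ctmx U.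
  by apply: mpinv_eq; rewrite eA; apply: penrose_unitary => //;
     apply: penrose_col; apply: penrose_mulN => //; apply: mpinvP.
have pB : mpinv B = U *m row_mx (ctmx N *m invmx Sigma) 0 *m ctmx U.
  by apply: mpinv_eq; rewrite eB'; apply: penrose_unitary => //;
     apply: penrose_col; apply: penrose_mulN.
have pAB : mpinv (A *m B) =
    U *m row_mx (ctmx N *m mpinv (W *m K *m Sigma)) 0 *m ctmx U.
  by apply: mpinv_eq; rewrite eAB; apply: penrose_unitary => //;
     apply: penrose_col; apply: penrose_mulN => //; apply: mpinvP.
have eW : mpinv W = invmx Sigma *m T by rewrite /W mpinvK.
have pBA : mpinv B *m mpinv A =
    U *m row_mx (ctmx N *m (invmx Sigma *m ctmx K *m invmx Sigma *m T)) 0 *m ctmx U.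
  rewrite pB pA eW !mulmxA -(mulmxA _ (ctmx U) U) hU' mulmx1 -(mulmxA U) mul_mx_row mulmx0.
  rewrite /N ctmx_row !mul_col_mx mul_row_col mul0mx addr0 !mul_col_mx.
  by rewrite !mulmxA.
rewrite pAB pBA; split => [h|->] //.
have := unit_blk_inj _ _ _ _ _ _ hU' h => /(congr1 (mulmx N)).
by rewrite !mulmxA hN !mul1mx.
Qed.
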